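(* Let $\Omega\subset\mathbb{R}^d$ be a bounded domain, $\kappa$ a positive coefficient on $\Omega$, and $a(u,v)=\int_\Omega \kappa\nabla u\cdot\nabla v$. Let $V_{1,H},V_{2,H}$ be finite-dimensional real vector spaces and, for $j=1,2$, let $T_{j,0},T_{j,1}$ be linear maps from $V_{j,H}$ into a space of functions on which $a(\cdot,\cdot)$ and the $L^2(\Omega)$ inner product $(\cdot,\cdot)$ are defined; put $T_j=T_{j,0}+T_{j,1}$. For $i,j\in\{1,2\}$, $U\in V_{j,H}$, $W\in V_{i,H}$ define $$m_{ij}(U,W)=(T_jU,T_iW),\quad a_{ij}(U,W)=a(T_{j,1}U,T_{i,1}W),\quad c_{ij}(U,W)=a(T_{j,0}U,T_{i,0}W),$$ and for $W_1\in V_{1,H}$, $W_2\in V_{2,H}$, $$\|(W_1,W_2)\|_m^2=\sum_{i,j=1}^2 m_{ij}(W_j,W_i),\quad \|(W_1,W_2)\|_a^2=\sum_{i,j=1}^2 a_{ij}(W_j,W_i),\quad \|(W_1,W_2)\|_c^2=\sum_{i,j=1}^2 c_{ij}(W_j,W_i),$$ and $\|W\|_{a_{22}}^2=a_{22}(W,W)$ for $W\in V_{2,H}$. Let $\tau>0$ and let sequences $U_1^n\in V_{1,H}$, $U_2^n\in V_{2,H}$ ($n\ge 0$) satisfy, for every $n\ge1$, the scheme (discretization scheme 1 with zero source) $$\tfrac{1}{\tau^2} m_{11}(U_1^{n+1}-2U_1^n+U_1^{n-1},W_1)+\tfrac{1}{\tau^2} m_{12}(U_2^{n+1}-2U_2^n+U_2^{n-1},W_1)+\tfrac12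 a_{11}(U_1^{n+1}+U_1^{n-1},W_1)+a_{12}(U_2^n,W_1)+\tfrac12 c_{11}(U_1^{n+1}+U_1^{n-1},W_1)+\tfrac12 c_{12}(U_2^{n+1}+U_2^{n-1},W_1)=0$$ for all $W_1\in V_{1,H}$, and $$\tfrac{1}{\tau^2} m_{22}(U_2^{n+1}-2U_2^n+U_2^{n-1},W_2)+\tfrac{1}{\tau^2} m_{21}(U_1^{n+1}-2U_1^n+U_1^{n-1},W_2)+a_{21}(U_1^n,W_2)+a_{22}(U_2^n,W_2)+\tfrac12 c_{21}(U_1^{n+1}+U_1^{n-1},W_2)+\tfrac12 c_{22}(U_2^{n+1}+U_2^{n-1},W_2)=0$$ for all $W_2\in V_{2,H}$. Define $$E^{n+\frac12}=\tfrac{2}{\tau^2}\|(U_1^{n+1}-U_1^n,U_2^{n+1}-U_2^n)\|_m^2+\|(U_1^{n+1},U_2^{n+1})\|_c^2+\|(U_1^n,U_2^n)\|_c^2+\|(U_1^{n+1},U_2^n)\|_a^2+\|(U_1^n,U_2^{n+1})\|_a^2-\|U_2^{n+1}-U_2^n\|_{a_{22}}^2.$$ Then $E^{n+\frac12}=E^{n-\frac12}$ for every $n\ge1$.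
   Context: This is the paper's setting of a multicontinuum spatial discretization of the wave equation $\partial_{tt}u-\nabla\cdot(\kappa\nabla u)=f$ with zero Dirichlet data: $V_{j,H}=\prod_{k\in I_j}V_H$ where $V_H$ is a coarse finite element space and $I_1\sqcup I_2=\{1,\dots,N\}$ is a partition of the continua indices; $T_{j,0}((U_k)_{k\in I_j})=\sum_{K}\mathbf{1}_K\sum_{k\in I_j}\phi_k^K U_k$ and $T_{j,1}((U_k)_{k\in I_j})=\sum_K \mathbf{1}_K\sum_{k\in I_j}\sum_{m=1}^d\phi_k^{K,m}\partial_{x_m}U_k$, the sums over coarse blocks $K$, with fixed multiscale basis functions $\phi_k^K,\phi_k^{K,m}$ (obtained in the paper from local constrained energy-minimization cell problems). The source term is taken to be zero ($f_1=f_2=0$), as the paper assumes for the energy analysis. *)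

(* Defs.v *)
From HB Require Import structures.
From mathcomp Require Import all_boot all_order all_algebra.
Set Implicit Arguments. Unset Strict Implicit. Unset Printing Implicit Defensive.
Import Order.TTheory GRing.Theory Num.Theory.
Local Open Scope ring_scope.

(* A symmetric bilinear form on a real vector space F
   (abstracts a(u,v) = int kappa grad u . grad v and the L^2 product). *)
Definition sym_bilinear (R : ringType) (F : lmodType R) (b : F -> F -> R) :=
  (forall u v, b u v = b v u) /\
  (forall (c : R) u v w, b (c *: u + v) w = c * b u w + b v w).

(* Nonnegativity (a is positive semidefinite since kappa > 0,
   the L^2 product is positive definite). *)
Definition psd (R : numDomainType) (F : lmodType R) (b : F -> F -> R) :=
  forall u, 0 <= b u u.

Definition Tsum (R : ringType) (V F : lmodType R) (T0 T1 : V -> F) : V -> F :=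
  fun U => T0 U + T1 U.

Definition pform (R : ringType) (Vj Vi F : lmodType R) (b : F -> F -> R)
  (Sj : Vj -> F) (Si : Vi -> F) (U : Vj) (W : Vi) : R := b (Sj U) (Si W).

Definition pnorm2 (R : ringType) (V1 V2 F : lmodType R) (b : F -> F -> R)
  (S1 : V1 -> F) (S2 : V2 -> F) (W1 : V1) (W2 : V2) : R :=
  pform b S1 S1 W1 W1 + pform b S2 S1 W2 W1 +
  pform b S1 S2 W1 W2 + pform b S2 S2 W2 W2.

Definition energy (R : fieldType) (V1 V2 F : lmodType R)
  (a l2 : F -> F -> R) (T10 T11 : V1 -> F) (T20 T21 : V2 -> F) (tau : R)
  (U1 : nat -> V1) (U2 : nat -> V2) (n : nat) : R :=
  let T1 := Tsum T10 T11 in let T2 := Tsum T20 T21 in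
  2 / tau ^+ 2 * pnorm2 l2 T1 T2 (U1 n.+1 - U1 n) (U2 n.+1 - U2 n)
  + pnorm2 a T10 T20 (U1 n.+1) (U2 n.+1)
  + pnorm2 a T10 T20 (U1 n) (U2 n)
  + pnorm2 a T11 T21 (U1 n.+1) (U2 n)
  + pnorm2 a T11 T21 (U1 n) (U2 n.+1)
  - pform a T21 T21 (U2 n.+1 - U2 n) (U2 n.+1 - U2 n).

(* Main.v *)
Require Import Defs.
From HB Require Import structures.
From mathcomp Require Import all_boot all_order all_algebra.
From mathcomp Require Import ring.
Import Order.TTheory GRing.Theory Num.Theory.
Local Open Scope ring_scope.


Lemma symdec (R : fieldType) (F : lmodType R) (b : F -> F -> R) :
  sym_bilinear b -> (2:R) != 0 ->
  exists sb : F -> F -> R,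
    (forall u v, b u v = (sb u v + sb v u) / 2) /\
       ((forall u v w, sb (u + v) w = sb u w + sb v w) /\
       ((forall u v w, sb (u - v) w = sb u w - sb v w) /\
       ((forall c u w, sb (c *: u) w = c * sb u w) /\
       ((forall u v w, sb w (u + v) = sb w u + sb w v) /\
       ((forall u v w, sb w (u - v) = sb w u - sb w v) /\
        (forall c u w, sb w (c *: u) = c * sb w u)))))).
Proof.
move=> [hs hl] h2; exists b.
have b0 : forall w, b 0 w = 0.
  move=> w; have := hl 1 0 0 w; rewrite scale1r addr0 mul1r.
  by move/(congr1 (fun t => t - b 0 w)); rewrite subrr addrK => <-.
have bZ : forall c u w, b (c *: u) w = c * b u w.
  by move=> c u w; have := hl c u 0 w; rewrite addr0 b0 addr0 => ->.
have bD : forall u v w, b (u + v) w = b u w + b v w.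
  by move=> u v w; have := hl 1 u v w; rewrite scale1r mul1r.
have bB : forall u v w, b (u - v) w = b u w - b v w.
  by move=> u v w; rewrite bD -scaleN1r bZ mulN1r.
do !split; try done.
- by move=> u v; rewrite (hs v u) -mulr2n -[_ *+ 2]mulr_natr mulfK.
- by move=> u v w; rewrite [LHS]hs bD !(hs w).
- by move=> u v w; rewrite [LHS]hs bB !(hs w).
- by move=> c u w; rewrite [LHS]hs bZ (hs w).
Qed.

Lemma pairL (R : ringType) (F V1 V2 : lmodType R) (b : F -> F -> R)
  (S1 : V1 -> F) (S2 : V2 -> F) x y w1 w2 :
  sym_bilinear b ->
  pform b S1 S1 x w1 + pform b S2 S1 y w1 + pform b S1 S2 x w2 + pform b S2 S2 y w2
  = b (S1 x + S2 y) (S1 w1 + S2 w2).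
Proof.
move=> [hs hl].
have bD : forall u v w, b (u + v) w = b u w + b v w.
  by move=> u v w; have := hl 1 u v w; rewrite scale1r mul1r.
have bD' : forall u v w, b w (u + v) = b w u + b w v.
  by move=> u v w; rewrite hs bD !(hs w).
rewrite /pform bD !bD' !addrA; congr (_ + _); exact: addrAC.
Qed.

Theorem theorem1 (R : realFieldType) (F : lmodType R)
  (a l2 : F -> F -> R)
  (ha : sym_bilinear a) (ha0 : psd a)
  (hl2 : sym_bilinear l2) (hl20 : psd l2)
  (V1 V2 : vectType R)
  (T10 T11 : {linear V1 -> F}) (T20 T21 : {linear V2 -> F})
  (tau : R) (htau : 0 < tau)
  (U1 : nat -> V1) (U2 : nat -> V2) :
  let T1 := Tsum T10 T11 in
  let T2 := Tsum T20 T21 in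
  (forall n, (1 <= n)%N ->
    forall W1 : V1,
      1 / tau ^+ 2 * pform l2 T1 T1 (U1 n.+1 - 2 *: U1 n + U1 n.-1) W1
    + 1 / tau ^+ 2 * pform l2 T2 T1 (U2 n.+1 - 2 *: U2 n + U2 n.-1) W1
    + 1 / 2 * pform a T11 T11 (U1 n.+1 + U1 n.-1) W1
    + pform a T21 T11 (U2 n) W1
    + 1 / 2 * pform a T10 T10 (U1 n.+1 + U1 n.-1) W1
    + 1 / 2 * pform a T20 T10 (U2 n.+1 + U2 n.-1) W1 = 0) ->
  (forall n, (1 <= n)%N ->
    forall W2 : V2,
      1 / tau ^+ 2 * pform l2 T2 T2 (U2 n.+1 - 2 *: U2 n + U2 n.-1) W2
    + 1 / tau ^+ 2 * pform l2 T1 T2 (U1 n.+1 - 2 *: U1 n + U1 n.-1) W2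
    + pform a T11 T21 (U1 n) W2
    + pform a T21 T21 (U2 n) W2
    + 1 / 2 * pform a T10 T20 (U1 n.+1 + U1 n.-1) W2
    + 1 / 2 * pform a T20 T20 (U2 n.+1 + U2 n.-1) W2 = 0) ->
  forall n, (1 <= n)%N ->
    energy a l2 T10 T11 T20 T21 tau U1 U2 n =
    energy a l2 T10 T11 T20 T21 tau U1 U2 n.-1.
Proof.
move=> T1 T2 H1 H2 [|m] // _.
have h2 : (2:R) != 0 by rewrite pnatr_eq0.
have htau0 : tau != 0 by rewrite gt_eqF.
have e1 := H1 m.+1 isT (U1 m.+2 - U1 m).
have e2 := H2 m.+1 isT (U2 m.+2 - U2 m).
simpl in e1, e2.
have G : (1 / tau ^+ 2 * (pform l2 T1 T1 (U1 m.+2 - 2 *: U1 m.+1 + U1 m) (U1 m.+2 - U1 m)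
      + pform l2 T2 T1 (U2 m.+2 - 2 *: U2 m.+1 + U2 m) (U1 m.+2 - U1 m)
      + pform l2 T1 T2 (U1 m.+2 - 2 *: U1 m.+1 + U1 m) (U2 m.+2 - U2 m)
      + pform l2 T2 T2 (U2 m.+2 - 2 *: U2 m.+1 + U2 m) (U2 m.+2 - U2 m))
    + 1 / 2 * (pform a T10 T10 (U1 m.+2 + U1 m) (U1 m.+2 - U1 m)
      + pform a T20 T10 (U2 m.+2 + U2 m) (U1 m.+2 - U1 m)
      + pform a T10 T20 (U1 m.+2 + U1 m) (U2 m.+2 - U2 m)
      + pform a T20 T20 (U2 m.+2 + U2 m) (U2 m.+2 - U2 m))
    + (1 / 2 * pform a T11 T11 (U1 m.+2 + U1 m) (U1 m.+2 - U1 m)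
      + pform a T21 T11 (U2 m.+1) (U1 m.+2 - U1 m)
      + pform a T11 T21 (U1 m.+1) (U2 m.+2 - U2 m)
      + pform a T21 T21 (U2 m.+1) (U2 m.+2 - U2 m))) = 0.
  have h := congr2 (fun x y => x + y) e1 e2; rewrite /= addr0 in h.
  by apply: (etrans _ h); ring.
apply/eqP; rewrite -subr_eq0; apply/eqP.
rewrite -[X in X = 0](subr0) -[X in _ - X = 0](mulr0 2) -[X in _ - 2 * X = 0]G.
rewrite /energy /pnorm2 /T1 /T2 !(@pairL _ _ _ _ a _ _ _ _ _ _ ha) !(@pairL _ _ _ _ l2 _ _ _ _ _ _ hl2) /pform.
have [sa [Ea [aD [aB [aZ [aD' [aB' aZ']]]]]]] := @symdec _ _ a ha h2.
have [sl [El [lD [lB [lZ [lD' [lB' lZ']]]]]]] := @symdec _ _ l2 hl2 h2.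
have D10 := linearD T10; have N10 := linearN T10.
have D11 := linearD T11; have N11 := linearN T11.
have D20 := linearD T20; have N20 := linearN T20.
have D21 := linearD T21; have N21 := linearN T21.
have Z10 : forall (c : R) (x : V1), T10 (c *: x) = c *: T10 x by move=> c x; rewrite linearZ.
have Z11 : forall (c : R) (x : V1), T11 (c *: x) = c *: T11 x by move=> c x; rewrite linearZ.
have Z20 : forall (c : R) (x : V2), T20 (c *: x) = c *: T20 x by move=> c x; rewrite linearZ.
have Z21 : forall (c : R) (x : V2), T21 (c *: x) = c *: T21 x by move=> c x; rewrite linearZ.
have aN : forall u w, sa (- u) w = - sa u w by move=> u w; rewrite -scaleN1r aZ mulN1r.
have aN' : forall u w, sa w (- u) = - sa w u by move=> u w; rewrite -scaleN1r aZ' mulN1r.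
have lN : forall u w, sl (- u) w = - sl u w by move=> u w; rewrite -scaleN1r lZ mulN1r.
have lN' : forall u w, sl w (- u) = - sl w u by move=> u w; rewrite -scaleN1r lZ' mulN1r.
have S1D : forall x y, Tsum T10 T11 (x + y) = Tsum T10 T11 x + Tsum T10 T11 y.
  by move=> x y; rewrite /Tsum D10 D11 addrACA.
have S1N : forall x, Tsum T10 T11 (- x) = - Tsum T10 T11 x.
  by move=> x; rewrite /Tsum N10 N11 opprD.
have S1Z : forall (c : R) x, Tsum T10 T11 (c *: x) = c *: Tsum T10 T11 x.
  by move=> c x; rewrite /Tsum Z10 Z11 scalerDr.
have S2D : forall x y, Tsum T20 T21 (x + y) = Tsum T20 T21 x + Tsum T20 T21 y.
  by move=> x y; rewrite /Tsum D20 D21 addrACA.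
have S2N : forall x, Tsum T20 T21 (- x) = - Tsum T20 T21 x.
  by move=> x; rewrite /Tsum N20 N21 opprD.
have S2Z : forall (c : R) x, Tsum T20 T21 (c *: x) = c *: Tsum T20 T21 x.
  by move=> c x; rewrite /Tsum Z20 Z21 scalerDr.
rewrite !(D10, N10, Z10, D11, N11, Z11, D20, N20, Z20, D21, N21, Z21, S1D, S1N, S1Z, S2D, S2N, S2Z).
set c0 := T10 (U1 m).
set c1 := T10 (U1 m.+1).
set c2 := T10 (U1 m.+2).
set p0 := T11 (U1 m).
set p1 := T11 (U1 m.+1).
set p2 := T11 (U1 m.+2).
set d0 := T20 (U2 m).
set d1 := T20 (U2 m.+1).
set d2 := T20 (U2 m.+2).
set q0 := T21 (U2 m).
set q1 := T21 (U2 m.+1).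
set q2 := T21 (U2 m.+2).
set A0 := Tsum T10 T11 (U1 m).
set A1 := Tsum T10 T11 (U1 m.+1).
set A2 := Tsum T10 T11 (U1 m.+2).
set B0 := Tsum T20 T21 (U2 m).
set B1 := Tsum T20 T21 (U2 m.+1).
set B2 := Tsum T20 T21 (U2 m.+2).
clearbody c0 c1 c2 p0 p1 p2 d0 d1 d2 q0 q1 q2 A0 A1 A2 B0 B1 B2.
rewrite !Ea !El.
rewrite !(aD, aB, aZ, aD', aB', aZ', lD, lB, lZ, lD', lB', lZ', aN, aN', lN, lN').
by field.
Qed.
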